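(* Let $\alpha\in[0,1]$ and let $\mathbf u:[0,\infty)\to\mathbb R^N$ be a differentiable solution of $$\frac{d\mathbf u}{dt}+\alpha\, D A\mathbf u+(1-\alpha)\big(A D\mathbf u+U D\mathbf a\big)=\mathbf 0,\qquad U=\operatorname{diag}(\mathbf u).$$ Define the product-rule defect $\Theta:=DA-AD-\operatorname{diag}(D\mathbf a)$ and $\gamma:=\|\operatorname{diag}(D\mathbf a)+(2\alpha-1)\Theta\|_H$. Then for all $t\ge0$ $$\frac{d}{dt}\|\mathbf u\|_H^2=-\mathbf u^T H\big(\operatorname{diag}(D\mathbf a)+(2\alpha-1)\Theta\big)\mathbf u\le\gamma\|\mathbf u\|_H^2,$$ and consequently $\|\mathbf u(t)\|_H^2\le e^{\gamma t}\|\mathbf u(0)\|_H^2$. In particular, for $\alpha=\tfrac12$ one has $\gamma=\|D\mathbf a\|_\infty=\max_i|(D\mathbf a)_i|$.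
   Context: Fix $N\ge2$. $H=\operatorname{diag}(H_{11},\dots,H_{NN})$ with all $H_{ii}>0$; $Q\in\mathbb R^{N\times N}$ satisfies $Q+Q^T=0$ (periodic SBP operator); $D:=H^{-1}Q$. The vector $\mathbf a\in\mathbb R^N$ has entries $a_i>0$ (samples of a positive coefficient $a(x)$ at the nodes) and $A=\operatorname{diag}(\mathbf a)$. For $\mathbf v\in\mathbb R^N$, $\|\mathbf v\|_H^2=\sum_i H_{ii}v_i^2$, and for a matrix $M$, $\|M\|_H=\sup_{\mathbf v\neq0}\|M\mathbf v\|_H/\|\mathbf v\|_H$ (induced norm). *)

(* Defs.v *)
From HB Require Import structures.
From mathcomp Require Import all_boot all_order all_algebra.
From mathcomp Require Import all_classical all_reals all_analysis.
Set Implicit Arguments. Unset Strict Implicit. Unset Printing Implicit Defensive.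
Import Order.TTheory GRing.Theory Num.Theory.
Import numFieldNormedType.Exports.
Local Open Scope classical_set_scope.
Local Open Scope ring_scope.

Section Defs.
Variables (R : realType) (N : nat).

Definition Hmat (h : 'cV[R]_N) : 'M[R]_N := diag_mx h^T.

Definition Hnorm2 (h v : 'cV[R]_N) : R := \sum_(i < N) h i 0 * (v i 0) ^+ 2.
Definition Hnorm (h v : 'cV[R]_N) : R := Num.sqrt (Hnorm2 h v).

Definition Hopnorm (h : 'cV[R]_N) (M : 'M[R]_N) : R :=
  sup [set Hnorm h (M *m v) / Hnorm h v | v in [set v : 'cV[R]_N | v != 0]].

Definition Dmat (h : 'cV[R]_N) (Q : 'M[R]_N) : 'M[R]_N := invmx (Hmat h) *m Q.

Definition Theta (h : 'cV[R]_N) (Q : 'M[R]_N) (a : 'cV[R]_N) : 'M[R]_N :=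
  Dmat h Q *m diag_mx a^T - diag_mx a^T *m Dmat h Q - diag_mx (Dmat h Q *m a)^T.

End Defs.

(* Derivative of a real function on [0, oo): at t >= 0, the difference
   quotient converges to l as h -> 0, h <> 0, restricted to t + h >= 0
   (so it is the two-sided derivative for t > 0 and the right derivative
   at t = 0). *)
Definition deriv_nonneg {R : realType} (f : R -> R) (t l : R) : Prop :=
  (fun s : R => s^-1 * (f (t + s) - f t))
    @ within (fun s : R => 0 <= t + s) (0 : R)^' --> l.

(* Main.v *)
Require Import Defs.
From HB Require Import structures.
From mathcomp Require Import all_boot all_order all_algebra.
From mathcomp Require Import all_classical all_reals all_analysis.
From mathcomp Require Import ring lra.
Import Order.TTheory GRing.Theory Num.Theory.
Import numFieldNormedType.Exports.
Local Open Scope classical_set_scope.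
Local Open Scope ring_scope.

Section An.
Variable R : realType.
Local Notation FF t := (within (fun s : R => 0 <= t + s) (0 : R)^').

Lemma dn_cont (f : R -> R) t l : deriv_nonneg f t l ->
  (fun s => f (t + s)) @ FF t --> f t.
Proof.
move=> H.
have e : {near FF t, (fun s => f t + s * (s^-1 * (f (t+s) - f t))) =1 (fun s => f (t+s))}.
  rewrite near_withinE /dnbhs near_withinE; apply: nearW => s /= s0 _.
  by rewrite mulrA mulfV // mul1r addrC subrK.
apply: cvg_trans (near_eq_cvg e) _.
have K : (fun s => f t + s * (s^-1 * (f (t+s) - f t))) @ FF t --> f t + 0 * l.
  apply: cvgD; first exact: cvg_cst.
  apply: cvgM => //.
  apply: cvg_within_filter; apply: cvg_within_filter; exact: cvg_id.
by rewrite mul0r addr0 in K.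
Qed.

Lemma dn_derive (f : R -> R) t l : deriv_nonneg f t l -> 0 < t -> is_derive t 1 f l.
Proof.
move=> H t0.
have H0 : (fun s => s^-1 * (f (t+s) - f t)) @ 0^' --> l.
  apply: cvg_trans H; apply: cvg_fmap2 => A; rewrite /within /= => HA.
  have HP : \forall s \near 0^', 0 <= t + s.
    apply: nbhs_dnbhs; exists t => //= s; rewrite /ball/= sub0r normrN.
    move/ltr_normlP => [h1 _]; lra.
  by apply: filterS2 HP HA => s P1 P2; exact: P2 P1.
have E : (fun h : R => h^-1 *: ((f \o shift t) (h *: 1) - f t)) =
         (fun s => s^-1 * (f (t+s) - f t)).
  apply/funext => s /=; rewrite (addrC t); have -> : s%:A = s :> R by exact: mulr1.
  by [].
split; first by rewrite /derivable E; exact: cvgP H0.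
by rewrite /derive E; exact: cvg_lim.
Qed.

Lemma dn_right0 (f : R -> R) l : deriv_nonneg f 0 l -> f @ 0^'+ --> f 0.
Proof.
move=> H; have K := dn_cont _ _ _ H.
have E : (fun s => f (0 + s)) = f by apply/funext => s; rewrite add0r.
rewrite E in K; apply: cvg_trans K; apply: cvg_fmap2 => A.
rewrite /at_right /dnbhs /within /= => HA.
have HB : nbhs 0 (fun y : R => y != 0 -> 0 <= 0 + y -> A y) := HA.
apply: filterS HB => s P s0.
by apply: P; [exact: lt0r_neq0 | rewrite add0r ltW].
Qed.

Lemma dE (g x : R) : is_derive x 1 (fun s : R => expR (- (g * s))) (- g * expR (- (g * x))).
Proof.
have L : is_derive x 1 (fun s : R => - (g * s)) (- g).
  have H0 := @is_deriveZ R R R id (-g) x 1 1 (is_derive_id _ _).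
  have -> : (fun s : R => - (g * s)) = (fun s => (-g) *: (id s)).
    by apply/funext => s /=; rewrite /GRing.scale /= mulNr.
  apply: is_derive_eq.
  by rewrite /GRing.scale /= mulr1.
have dL : derivable (fun s : R => - (g * s)) x 1 by case: L.
have dX : derivable (@expR R) (- (g * x)) 1 by case: (is_derive_expR (- (g * x))).
have dC : derivable ((@expR R) \o (fun s : R => - (g * s))) x 1.
  apply/derivable1_diffP; apply: differentiable_comp; exact/derivable1_diffP.
have := derive1_comp dL dX.
rewrite !derive1E (@derive_val _ _ _ _ _ _ _ L) (@derive_val _ _ _ _ _ _ _ (is_derive_expR _)) => E.
have := derivableP dC; rewrite E mulrC; exact.
Qed.

Lemma gronwall (f df : R -> R) (g : R) :
  (forall t, 0 <= t -> deriv_nonneg f t (df t)) ->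
  (forall t, 0 <= t -> df t <= g * f t) ->
  forall t, 0 <= t -> f t <= expR (g * t) * f 0.
Proof.
move=> Hd Hle t t0.
case: (eqVneq t 0) => [->|tn0]; first by rewrite mulr0 expR0 mul1r.
have tp : 0 < t by rewrite lt_def tn0.
pose E := fun s : R => expR (- (g * s)).
pose dG := fun x => E x *: df x + f x *: (- g * E x).
have dGx (x : R) : 0 < x -> is_derive x 1 (E * f) (dG x).
  move=> xp; apply: is_deriveM; [exact: dE | exact: dn_derive _ _ _ (Hd x (ltW xp)) xp].
have cG (x : R) : 0 < x -> {for x, continuous (E * f)}.
  move=> xp; apply: differentiable_continuous; apply/derivable1_diffP.
  by case: (dGx x xp).
have cE : {for 0, continuous E}.
  apply: differentiable_continuous; apply/derivable1_diffP; by case: (dE g 0).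
have Hc : {within `[0, t], continuous (E * f)}.
  apply/continuous_within_itvP => //; split.
  - move=> x; rewrite in_itv /= => /andP [x0 _]; exact: cG.
  - apply: cvgM; first exact: cvg_at_right_filter cE.
    exact: dn_right0 _ _ (Hd 0 (lexx 0)).
  - exact: cvg_at_left_filter (cG t tp).
have [c /andP [c0 _] Hm] := MVT tp (fun x hx => dGx x (andP hx).1) Hc.
move: c0; rewrite bnd_simp => c0.
have HdG : dG c <= 0.
  rewrite /dG /GRing.scale /=.
  have -> : E c * df c + f c * (- g * E c) = (df c - g * f c) * E c.
    by ring.
  apply: mulr_le0_ge0; last by rewrite /E expR_ge0.
  by rewrite subr_le0 Hle // ltW.
have Gle : (E * f) t <= (E * f) 0.
  rewrite -subr_le0 Hm; apply: mulr_le0_ge0 => //; rewrite subr0 ltW //.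
have Gle' : expR (- (g * t)) * f t <= f 0.
  by move: Gle; rewrite /E; change (expR (- (g * t)) * f t <= expR (- (g * 0)) * f 0 -> expR (- (g * t)) * f t <= f 0); rewrite mulr0 oppr0 expR0 mul1r.
have -> : f t = expR (g * t) * (expR (- (g * t)) * f t).
  by rewrite expRN mulrA mulfV ?mul1r // gt_eqF // expR_gt0.
by apply: ler_wpM2l => //; exact: expR_ge0.
Qed.

End An.

Section Alg.
Variables (R : realType) (N : nat).

Lemma quad_H (h x y : 'cV[R]_N) :
  (x^T *m Hmat h *m y) 0 0 = \sum_i h i 0 * (x i 0 * y i 0).
Proof.
rewrite /Hmat mul_mx_diag !mxE; apply: eq_bigr => i _; rewrite !mxE; ring.
Qed.

Lemma wCS (w a b : 'I_N -> R) : (forall j, 0 <= w j) ->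
  (\sum_j w j * (a j * b j)) ^+ 2 <= (\sum_j w j * a j ^+ 2) * (\sum_j w j * b j ^+ 2).
Proof.
move=> w0.
set A := \sum_j w j * a j ^+ 2; set B := \sum_j w j * b j ^+ 2.
set C := \sum_j w j * (a j * b j).
have A0 : 0 <= A by apply: sumr_ge0 => j _; rewrite mulr_ge0 // sqr_ge0.
have B0 : 0 <= B by apply: sumr_ge0 => j _; rewrite mulr_ge0 // sqr_ge0.
have [A00|An0] := eqVneq A 0.
  have wa j : w j * a j = 0.
    have H : w j * a j ^+ 2 = 0.
      apply: (psumr_eq0P _ A00) => // i _; by rewrite mulr_ge0 // sqr_ge0.
    have : (w j * a j) ^+ 2 = 0.
      have -> : (w j * a j) ^+ 2 = w j * (w j * a j ^+ 2) by ring.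
      by rewrite H mulr0.
    by move/eqP; rewrite sqrf_eq0 => /eqP.
  have -> : C = 0 by rewrite /C big1 // => j _; rewrite mulrA wa mul0r.
  by rewrite A00 expr0n /= mul0r.
have Ap : 0 < A by rewrite lt_def An0 A0.
pose l := - C / A.
have E : \sum_j w j * (a j * l + b j) ^+ 2 = l ^+ 2 * A + 2 * l * C + B.
  rewrite /A /B /C !mulr_sumr -!big_split /=; apply: eq_bigr => j _; ring.
have P0 : 0 <= \sum_j w j * (a j * l + b j) ^+ 2.
  by apply: sumr_ge0 => j _; rewrite mulr_ge0 // sqr_ge0.
rewrite E in P0.
have E2 : l ^+ 2 * A + 2 * l * C + B = B - C ^+ 2 / A.
  by rewrite /l; field.
rewrite E2 subr_ge0 ler_pdivrMr // in P0.
by rewrite mulrC.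
Qed.

Lemma ratio_le (P n c : R) : 0 < n -> 0 <= c -> P <= c ^+ 2 * n ->
  Num.sqrt P / Num.sqrt n <= c.
Proof.
move=> n0 c0 Pc.
rewrite ler_pdivrMr ?sqrtr_gt0 //.
rewrite -[c in c * _](ger0_norm c0) -sqrtr_sqr -sqrtrM ?sqr_ge0 //.
by rewrite ler_sqrt // mulr_ge0 // ?sqr_ge0 // ltW.
Qed.

Lemma ratio_ge (P n c : R) : 0 <= P -> 0 < n -> Num.sqrt P / Num.sqrt n <= c ->
  P <= c ^+ 2 * n.
Proof.
move=> P0 n0; rewrite ler_pdivrMr ?sqrtr_gt0 // => H.
have s0 := sqrtr_ge0 P; have t0 := sqrtr_ge0 n.
have sP := sqr_sqrtr P0; have sn := sqr_sqrtr (ltW n0).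
rewrite -sP -sn; nra.
Qed.


Lemma Hn2_ge0 (h v : 'cV[R]_N) : (forall i, 0 < h i 0) -> 0 <= Hnorm2 h v.
Proof. by move=> hp; apply: sumr_ge0 => i _; rewrite mulr_ge0 ?sqr_ge0 // ltW. Qed.

Lemma Hn2_0 (h : 'cV[R]_N) : Hnorm2 h 0 = 0.
Proof. by rewrite /Hnorm2 big1 // => i _; rewrite mxE expr0n /= mulr0. Qed.

Lemma Hn2_gt0 (h v : 'cV[R]_N) : (forall i, 0 < h i 0) -> v != 0 -> 0 < Hnorm2 h v.
Proof.
move=> hp vn.
have [k vk] : exists k, v k 0 != 0.
  apply/existsP; apply: contraR vn; rewrite negb_exists => /forallP H.
  by apply/eqP/matrixP => i j; rewrite (ord1 j) mxE; apply/eqP; have := H i; rewrite negbK.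
rewrite /Hnorm2 (bigD1 k) //=.
have t1 : 0 < h k 0 * v k 0 ^+ 2 by rewrite mulr_gt0 // lt_def sqr_ge0 sqrf_eq0 vk.
have t2 : 0 <= \sum_(i < N | i != k) h i 0 * v i 0 ^+ 2.
  by apply: sumr_ge0 => i _; rewrite mulr_ge0 ?sqr_ge0 // ltW.
lra.
Qed.

Lemma Mv_bound (h : 'cV[R]_N) (M : 'M[R]_N) : (forall i, 0 < h i 0) ->
  exists K, 0 <= K /\ forall v, Hnorm2 h (M *m v) <= K * Hnorm2 h v.
Proof.
move=> hp.
pose Ki i := \sum_j h j 0 * (M i j / h j 0) ^+ 2.
exists (\sum_i h i 0 * Ki i); split.
  apply: sumr_ge0 => i _; apply: mulr_ge0; first exact: ltW.
  by rewrite /Ki; apply: sumr_ge0 => j _; rewrite mulr_ge0 ?sqr_ge0 // ltW.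
move=> v; rewrite /Hnorm2 mulr_suml; apply: ler_sum => i _.
rewrite -mulrA; apply: ler_wpM2l; first exact: ltW.
have -> : (M *m v) i 0 = \sum_j h j 0 * ((M i j / h j 0) * v j 0).
  rewrite mxE; apply: eq_bigr => j _.
  by rewrite mulrA mulrCA mulfV ?mulr1 // gt_eqF.
exact: (wCS (fun j => h j 0) (fun j => M i j / h j 0) (fun j => v j 0) (fun j => ltW (hp j))).
Qed.

Lemma Hop_props (h : 'cV[R]_N) (M : 'M[R]_N) (i0 : 'I_N) : (forall i, 0 < h i 0) ->
  0 <= Hopnorm h M /\ forall v, Hnorm2 h (M *m v) <= Hopnorm h M ^+ 2 * Hnorm2 h v.
Proof.
move=> hp.
set S := [set Hnorm h (M *m v) / Hnorm h v | v in [set v : 'cV[R]_N | v != 0]].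
have [K [K0 HK]] := Mv_bound h M hp.
have ubS : has_ubound S.
  exists (Num.sqrt K) => r [v vn <-].
  apply: ratio_le; [exact: Hn2_gt0 | exact: sqrtr_ge0 |].
  by rewrite sqr_sqrtr.
have v1n : const_mx 1 != 0 :> 'cV[R]_N.
  by apply/eqP => /matrixP /(_ i0 0); rewrite !mxE; apply/eqP; exact: oner_neq0.
have S1 : S (Hnorm h (M *m const_mx 1) / Hnorm h (const_mx 1)) by exists (const_mx 1).
have r0 : 0 <= Hnorm h (M *m const_mx 1) / Hnorm h (const_mx 1).
  by rewrite divr_ge0 // sqrtr_ge0.
have g0 : 0 <= Hopnorm h M := le_trans r0 (ub_le_sup ubS S1).
split => // v.
have [->|vn] := eqVneq v 0; first by rewrite mulmx0 !Hn2_0 mulr0.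
apply: ratio_ge; [exact: Hn2_ge0 | exact: Hn2_gt0 |].
by apply: (ub_le_sup ubS); exists v.
Qed.

Lemma quad_bound (h : 'cV[R]_N) (M : 'M[R]_N) (x : 'cV[R]_N) (i0 : 'I_N) :
  (forall i, 0 < h i 0) ->
  - (x^T *m Hmat h *m M *m x) 0 0 <= Hopnorm h M * Hnorm2 h x.
Proof.
move=> hp; have [g0 Hg] := Hop_props h M i0 hp.
rewrite -mulmxA quad_H.
have C := wCS (fun j => h j 0) (fun j => x j 0) (fun j => (M *m x) j 0) (fun j => ltW (hp j)).
have := Hg x; rewrite /Hnorm2 => Hy.
move: C Hy; set S := \sum_j _; set n := \sum_j _; set P := \sum_j _ => C Hy.
have n0 : 0 <= n by apply: sumr_ge0 => i _; rewrite mulr_ge0 ?sqr_ge0 // ltW.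
set g := Hopnorm h M in g0 Hy *.
have C2 : S ^+ 2 <= (g * n) ^+ 2.
  apply: le_trans C _.
  have -> : (g * n) ^+ 2 = n * (g ^+ 2 * n) by ring.
  by apply: ler_wpM2l.
have gn : 0 <= g * n by rewrite mulr_ge0.
nra.
Qed.

Lemma Hop_diag (h d : 'cV[R]_N) (i0 : 'I_N) : (forall i, 0 < h i 0) ->
  Hopnorm h (diag_mx d^T) = \big[Num.max/0]_(i < N) `|d i 0|.
Proof.
move=> hp.
set m := \big[Num.max/0]_(i < N) `|d i 0|.
have m0 : 0 <= m := bigmax_ge_id _ _ _ _.
have dm i : `|d i 0| <= m := le_bigmax _ _ i.
have [k _ Ek] := @eq_bigmax _ R _ 0 i0 xpredT (fun i => `|d i 0|) isT (fun i _ => normr_ge0 _).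
have Em : m = `|d k 0| := Ek.
set S := [set Hnorm h (diag_mx d^T *m v) / Hnorm h v | v in [set v : 'cV[R]_N | v != 0]].
have ub : ubound S m.
  move=> r [v vn <-]; apply: ratio_le; [exact: Hn2_gt0 | exact: m0 |].
  rewrite /Hnorm2 mulr_sumr; apply: ler_sum => i _.
  rewrite mul_diag_mx !mxE.
  have := dm i; rewrite ler_norml => /andP [d1 d2].
  have hv : 0 <= h i 0 * v i 0 ^+ 2 by rewrite mulr_ge0 ?sqr_ge0 // ltW.
  have d2m : d i 0 ^+ 2 <= m ^+ 2 by nra.
  have -> : h i 0 * (d i 0 * v i 0) ^+ 2 = d i 0 ^+ 2 * (h i 0 * v i 0 ^+ 2) by ring.
  by apply: ler_wpM2r.
have dk : delta_mx k 0 != 0 :> 'cV[R]_N.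
  by apply/eqP => /matrixP /(_ k 0); rewrite !mxE !eqxx /=; apply/eqP; exact: oner_neq0.
have Hd : Hnorm2 h (delta_mx k 0 : 'cV[R]_N) = h k 0.
  rewrite /Hnorm2 (bigD1 k) //= big1 ?addr0; first by rewrite mxE !eqxx /= expr1n mulr1.
  by move=> i ik; rewrite mxE (negbTE ik) /= expr0n /= mulr0.
have Hdd : Hnorm2 h (diag_mx d^T *m (delta_mx k 0 : 'cV[R]_N)) = `|d k 0| ^+ 2 * h k 0.
  rewrite /Hnorm2 (bigD1 k) //= big1 ?addr0.
    by rewrite mul_diag_mx !mxE !eqxx /= mulr1 real_normK ?num_real // mulrC.
  by move=> i ik; rewrite mul_diag_mx !mxE (negbTE ik) /= mulr0 expr0n /= mulr0.
have Sm : S m.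
  exists (delta_mx k 0) => //; rewrite /Hnorm Hd Hdd sqrtrM ?sqr_ge0 // sqrtr_sqr.
  rewrite normr_id -Em mulfK // gt_eqF // sqrtr_gt0 //.
apply/le_anti/andP; split.
  by apply: ge_sup => //; exists m.
by apply: ub_le_sup => //; exists m.
Qed.

End Alg.

Section Mx.
Variables (R : realType) (N : nat).
Local Notation FF t := (within (fun s : R => 0 <= t + s) (0 : R)^').



Lemma dn_Hn2 (h : 'cV[R]_N) (u du : R -> 'cV[R]_N) t :
  (forall i, deriv_nonneg (fun s => u s i 0) t (du t i 0)) ->
  deriv_nonneg (fun s => Hnorm2 h (u s)) t
    (\sum_i h i 0 * ((u t i 0 + u t i 0) * du t i 0)).
Proof.
move=> H; rewrite /deriv_nonneg /Hnorm2.
have -> : (fun s => s^-1 * (\sum_i h i 0 * u (t+s) i 0 ^+2 - \sum_i h i 0 * u t i 0 ^+2))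
  = (fun s => \sum_i h i 0 * ((u (t+s) i 0 + u t i 0) * (s^-1 * (u (t+s) i 0 - u t i 0)))).
  by apply/funext => s; rewrite -sumrB mulr_sumr; apply: eq_bigr => i _; ring.
apply: (@cvg_big R 'I_N +%R 0 xpredT add_continuous) => // i _.
apply: cvgM; first exact: cvg_cst.
apply: cvgM; last exact: H.
apply: cvgD; last exact: cvg_cst.
exact: dn_cont _ _ _ (H i).
Qed.

Definition phi (h x : 'cV[R]_N) (M : 'M[R]_N) := (x^T *m Hmat h *m M *m x) 0 0.

Lemma phiD h x M1 M2 : phi h x (M1 + M2) = phi h x M1 + phi h x M2.
Proof. by rewrite /phi mulmxDr mulmxDl mxE. Qed.
Lemma phiN h x M : phi h x (- M) = - phi h x M.
Proof. by rewrite /phi mulmxN mulNmx mxE. Qed.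
Lemma phiZ h x k M : phi h x (k *: M) = k * phi h x M.
Proof. by rewrite /phi -scalemxAr -scalemxAl mxE. Qed.
Lemma phiB h x M1 M2 : phi h x (M1 - M2) = phi h x M1 - phi h x M2.
Proof. by rewrite phiD phiN. Qed.

Lemma key_id (h : 'cV[R]_N) (Q : 'M[R]_N) (a x y : 'cV[R]_N) (alpha : R) :
  (forall i, 0 < h i 0) -> Q + Q^T = 0 ->
  y + alpha *: (Dmat h Q *m diag_mx a^T *m x)
     + (1 - alpha) *: (diag_mx a^T *m Dmat h Q *m x
                       + diag_mx x^T *m Dmat h Q *m a) = 0 ->
  \sum_i h i 0 * ((x i 0 + x i 0) * y i 0) =
  - (x^T *m Hmat h *m (diag_mx (Dmat h Q *m a)^T + (2 * alpha - 1) *: Theta h Q a) *m x) 0 0.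
Proof.
move=> hp QQ Ey.
set D := Dmat h Q in Ey *; set A := diag_mx a^T in Ey *.
set dd := diag_mx (D *m a)^T.
have Xd : diag_mx x^T *m D *m a = dd *m x.
  by rewrite -mulmxA; apply/matrixP => i j; rewrite !mul_diag_mx !mxE (ord1 j) mulrC.
rewrite Xd in Ey.
have Ey' : y = (- (alpha *: (D *m A) + (1 - alpha) *: (A *m D + dd))) *m x.
  rewrite mulNmx !mulmxDl -!scalemxAl !mulmxDl.
  by apply/eqP; rewrite -addr_eq0 addrA; apply/eqP.
have LHS : \sum_i h i 0 * ((x i 0 + x i 0) * y i 0) = 2 * (x^T *m Hmat h *m y) 0 0.
  rewrite [in RHS]/Hmat mul_mx_diag !mxE mulr_sumr; apply: eq_bigr => i _.
  by rewrite !mxE; ring.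
rewrite LHS Ey' mulmxA -/(phi h x _) -/(phi h x _).
have HU : Hmat h \in unitmx.
  rewrite unitmxE det_diag unitfE; apply/prodf_neq0 => i _; rewrite mxE gt_eqF //.
have HD : Hmat h *m D = Q by rewrite /D /Dmat mulmxA mulmxV // mul1mx.
have QT : Q^T = - Q by apply/eqP; rewrite -addr_eq0 addrC; apply/eqP.
have pAD : phi h x (A *m D) = - phi h x (D *m A).
  rewrite /phi !mulmxA.
  have -> : x^T *m Hmat h *m A = x^T *m A *m Hmat h.
    by rewrite -!mulmxA /Hmat /A diag_mxC.
  rewrite -!(mulmxA _ (Hmat h) (invmx _)) mulmxV // !mulmx1.
  have T1 (M : 'M[R]_1) : M 0 0 = M^T 0 0 by rewrite mxE.
  rewrite (T1 (x^T *m A *m Q *m x)) !trmx_mul trmxK /A tr_diag_mx QT mulNmx mulmxN mxE.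
  by rewrite !mulmxA.
rewrite /Theta -/D -/A -/dd.
rewrite phiN !phiD !phiZ !phiB !phiD pAD; ring.
Qed.

End Mx.

Theorem mainTheorem1 (R : realType) (N : nat) (hN : (2 <= N)%N)
  (h : 'cV[R]_N) (Q : 'M[R]_N) (a : 'cV[R]_N) (alpha : R)
  (u du : R -> 'cV[R]_N) :
  (forall i, 0 < h i 0) ->
  Q + Q^T = 0 ->
  (forall i, 0 < a i 0) ->
  0 <= alpha <= 1 ->
  (* u is differentiable on [0, oo) with derivative du (componentwise) *)
  (forall t, 0 <= t -> forall i, deriv_nonneg (fun s => u s i 0) t (du t i 0)) ->
  (* the semi-discrete equation *)
  (forall t, 0 <= t ->
     du t + alpha *: (Dmat h Q *m diag_mx a^T *m u t)
     + (1 - alpha) *: (diag_mx a^T *m Dmat h Q *m u t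
                       + diag_mx (u t)^T *m Dmat h Q *m a) = 0) ->
  let B := diag_mx (Dmat h Q *m a)^T + (2 * alpha - 1) *: Theta h Q a in
  let gamma := Hopnorm h B in
  (forall t, 0 <= t ->
     deriv_nonneg (fun s => Hnorm2 h (u s)) t
       (- ((u t)^T *m Hmat h *m B *m u t) 0 0)
     /\ - ((u t)^T *m Hmat h *m B *m u t) 0 0 <= gamma * Hnorm2 h (u t))
  /\ (forall t, 0 <= t -> Hnorm2 h (u t) <= expR (gamma * t) * Hnorm2 h (u 0))
  /\ (alpha = 2^-1 -> gamma = \big[Num.max/0]_(i < N) `|(Dmat h Q *m a) i 0|).
Proof.
move=> hp QQ ap al Hdu Heq B gamma.
have N0 : (0 < N)%N by apply: leq_trans hN.
pose i0 := Ordinal N0.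
have P1 : forall t, 0 <= t ->
     deriv_nonneg (fun s => Hnorm2 h (u s)) t
       (- ((u t)^T *m Hmat h *m B *m u t) 0 0)
     /\ - ((u t)^T *m Hmat h *m B *m u t) 0 0 <= gamma * Hnorm2 h (u t).
  move=> t t0; split.
  - have H := dn_Hn2 _ _ h u du t (Hdu t t0).
    by rewrite (key_id _ _ h Q a (u t) (du t) alpha hp QQ (Heq t t0)) in H.
  - exact: quad_bound _ _ h B (u t) i0 hp.
split => //; split.
- move=> t t0.
  apply: (gronwall _ (fun s => Hnorm2 h (u s))
            (fun s => - ((u s)^T *m Hmat h *m B *m u s) 0 0) gamma) => // s s0.
  + exact: (P1 s s0).1.
  + exact: (P1 s s0).2.
- move=> ha; rewrite /gamma /B ha.
  have -> : 2 * 2^-1 - 1 = 0 :> R by rewrite mulfV ?subrr // pnatr_eq0.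
  by rewrite scale0r addr0; exact: Hop_diag.
Qed.
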